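(* Let $G\neq 1$ be a finite group with $G=AB$ for subgroups $A,B$. The following are pairwise equivalent: (1) $G=AB$ is a core-factorisation. (2) There is a normal series $1=N_0\trianglelefteq N_1\trianglelefteq\cdots\trianglelefteq N_n=G$ of $G$ (all $N_i\trianglelefteq G$) such that for each $1\le i\le n$, either $N_i/N_{i-1}\le AN_{i-1}/N_{i-1}$ or $N_i/N_{i-1}\le BN_{i-1}/N_{i-1}$. (3) For every proper normal subgroup $K$ of $G$ there is a normal subgroup $M$ of $G$ with $K<M$ such that $M/K\le AK/K$ or $M/K\le BK/K$. Moreover, in (1) and (2), each term $N_i$ of such a (chief, resp. normal) series satisfies $N_i=(N_i\cap A)(N_i\cap B)$, and for $N_i\neq 1$ the factorisation $N_i=(N_i\cap A)(N_i\cap B)$ is again a core-factorisation.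
   Context: All groups are finite. A subgroup $U$ of $G$ covers a section $V/W$ ($W\trianglelefteq V\le G$) if $W(U\cap V)=V$. If $1\neq G=AB$ is a product of subgroups $A$ and $B$, then $G=AB$ is called a core-factorisation if $G$ possesses a chief series each of whose chief factors is covered by $A$ or by $B$. *)

(* Defs.v *)
From HB Require Import structures.
From mathcomp Require Import all_boot all_order all_fingroup all_solvable.
Set Implicit Arguments. Unset Strict Implicit. Unset Printing Implicit Defensive.
Local Open Scope group_scope.

Definition covers (gT : finGroupType) (U V W : {set gT}) : Prop :=
  W * (U :&: V) = V.

Definition chief_series (gT : finGroupType) (G : {set gT})
  (N : nat -> {group gT}) (n : nat) : Prop :=
  N 0 = 1 :> {set gT} /\ N n = G :> {set gT} /\
  (forall i, 0 < i <= n -> chief_factor G (N i.-1) (N i)).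

Definition normal_series (gT : finGroupType) (G : {set gT})
  (N : nat -> {group gT}) (n : nat) : Prop :=
  N 0 = 1 :> {set gT} /\ N n = G :> {set gT} /\
  (forall i, i <= n -> N i <| G) /\
  (forall i, 0 < i <= n -> N i.-1 \subset N i).

Definition core_factorisation (gT : finGroupType) (G A B : {set gT}) : Prop :=
  G != 1 /\ G = A * B /\
  exists (N : nat -> {group gT}) (n : nat),
    chief_series G N n /\
    (forall i, 0 < i <= n -> covers A (N i) (N i.-1) \/ covers B (N i) (N i.-1)).

Definition normal_series_cond (gT : finGroupType) (G A B : {set gT})
  (N : nat -> {group gT}) (n : nat) : Prop :=
  normal_series G N n /\
  (forall i, 0 < i <= n ->
     (N i / N i.-1 \subset (A * N i.-1) / N i.-1) \/
     (N i / N i.-1 \subset (B * N i.-1) / N i.-1)).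

(* Main.v *)
Require Import Defs.
From mathcomp Require Import all_boot all_order all_fingroup all_solvable.
From mathcomp Require Import zify.
Set Implicit Arguments. Unset Strict Implicit. Unset Printing Implicit Defensive.
Local Open Scope group_scope.

Section Helpers.
Variable gT : finGroupType.
Implicit Types K H M X G A B : {group gT}.

Lemma build_series H (step : {group gT} -> {group gT} -> Prop)
  (hstep : forall K : {group gT}, K <| H -> K \proper H ->
     exists M : {group gT}, [/\ step K M, K \proper M & M <| H]) :
  forall K : {group gT}, K <| H -> exists (N : nat -> {group gT}) (n : nat),
   [/\ N 0 = K, N n = H :> {set gT}, (forall i, i <= n -> N i <| H),
       (forall i, 0 < i <= n -> N i.-1 \proper N i) &
       (forall i, 0 < i <= n -> step (N i.-1) (N i))].
Proof.
move=> K; move: {2}(#|H| - #|K|) (leqnn (#|H| - #|K|)) => m.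
elim: m K => [|m IH] K hm nKH.
  have eKH : gval K = gval H.
    apply/eqP; rewrite eqEcard normal_sub //=; move: hm; by rewrite leqn0 subn_eq0.
  exists (fun _ : nat => K); exists 0; split => //; move=> i /andP[a b]; lia.
have [eKH | neKH] := eqVneq (gval K) (gval H).
  exists (fun _ : nat => K); exists 0; split => //; move=> i /andP[a b]; lia.
have pKH : K \proper H by rewrite properEneq neKH normal_sub.
have [M [sKM pKM nMH]] := hstep K nKH pKH.
have c1 := proper_card pKM.
have c2 := subset_leq_card (normal_sub nMH).
have [N [n [N0 Nn nN pN sN]]] := IH M ltac:(lia) nMH.
exists (fun i => if i is j.+1 then N j else K), n.+1; split => //.
- by case=> [|i] hi //; apply: nN.
- case=> [|[|i]] //= hi; first by rewrite N0.
  by apply: (pN i.+1).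
- case=> [|[|i]] //= hi; first by rewrite N0.
  by apply: (sN i.+1).
Qed.

Lemma covers_sub (U : {set gT}) (V W : {group gT}) : W \subset V -> covers U V W <-> V \subset W * U.
Proof.
move=> sWV; rewrite /covers; split=> [<-|sV]; first by apply: mulgS; exact: subsetIl.
apply/eqP; rewrite eqEsubset mul_subG ?subsetIr //= group_modl //.
by rewrite subsetI sV subxx.
Qed.

Lemma quot_cond K (X U : {set gT}) : X \subset 'N(K) ->
  (X / K \subset (U * K) / K) = (X \subset K * U).
Proof. by move=> nKX; rewrite quotientMidr quotientSK. Qed.

Lemma ns_mono G (N : nat -> {group gT}) n : normal_series G N n ->
  forall j k, j <= k <= n -> N j \subset N k.
Proof.
move=> [_ [_ [_ sN]]] j k; elim: k => [|k IH] /andP[a b].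
  by have -> : j = 0 by lia.
have [ejk|ljk] := eqVneq j k.+1; first by rewrite ejk.
apply: subset_trans (IH _) (sN k.+1 _); lia.
Qed.

Lemma ns_fact G A B (N : nat -> {group gT}) n : A \subset G -> B \subset G ->
  normal_series_cond G A B N n ->
  forall i, i <= n -> N i :=: (N i :&: A) * (N i :&: B).
Proof.
move=> sAG sBG [[N0 [Nn [nN sN]]] cN]; elim=> [|i IH] hi.
  apply/eqP; rewrite eqEsubset mul_subG ?subsetIl //= andbT.
  by rewrite N0 !setI1g mulg1 subxx.
have nNi : N i <| G := nN i (ltnW hi).
have hNi := IH (ltnW hi).
have nA : A \subset 'N(N i) := subset_trans sAG (normal_norm nNi).
have nB : B \subset 'N(N i) := subset_trans sBG (normal_norm nNi).
have sNN : N i \subset N i.+1 := sN i.+1 hi.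
have nNN : N i.+1 \subset 'N(N i) :=
  subset_trans (normal_sub (nN _ hi)) (normal_norm nNi).
apply/eqP; rewrite eqEsubset mul_subG ?subsetIl //= andbT.
case: (cN i.+1 hi) => /= c; rewrite quot_cond // in c.
  rewrite -(normC nA) {1}hNi mulgA (mulGSid (subsetIr (N i) A)) in c.
  apply: subset_trans (_ : N i.+1 \subset (N i.+1 :&: A) * (N i :&: B)) _.
    by rewrite group_modr ?subsetI ?subxx ?c // (subset_trans (subsetIl _ _) sNN).
  by apply: mulgS; apply: setSI.
rewrite {1}hNi -mulgA (mulSGid (subsetIr (N i) B)) in c.
apply: subset_trans (_ : N i.+1 \subset (N i :&: A) * (B :&: N i.+1)) _.
  by rewrite group_modl ?subsetI ?subxx ?c // (subset_trans (subsetIl _ _) sNN).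
by apply: mulgSS; [apply: setSI | rewrite setIC].
Qed.

Lemma find_step G A B (N : nat -> {group gT}) n K i :
  normal_series_cond G A B N n -> A \subset G -> B \subset G ->
  i <= n -> ~~ (N i \subset K) ->
  exists j, [/\ 0 < j <= i, ~~ (N j \subset K) &
     (K * N j \subset K * A \/ K * N j \subset K * B)].
Proof.
move=> [[N0 [Nn [nN sN]]] cN] sAG sBG hi nsub.
have exP : exists j, ~~ (N j \subset K) by exists i.
case: (ex_minnP exP) => j nj hmin.
have ji : j <= i := hmin i nsub.
have j0 : 0 < j by move: nj; case: (j) => //; rewrite N0 sub1G.
have sK : N j.-1 \subset K.
  case: (boolP (N j.-1 \subset K)) => // h; exfalso; have := hmin _ h; lia.
have hj : j <= n by lia.
have nNj1 : N j.-1 <| G := nN _ (leq_trans (leq_pred j) hj).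
have nNj : N j \subset 'N(N j.-1) :=
  subset_trans (normal_sub (nN _ hj)) (normal_norm nNj1).
exists j; split => //; first by rewrite j0 ji.
case: (cN j ltac:(lia)) => c; rewrite quot_cond // in c; [left|right];
  apply: subset_trans (mulgS K c) _; rewrite mulgA; apply: mulSg;
  by rewrite mul_subG.
Qed.

Lemma covers_I (U : {set gT}) H (V W : {group gT}) :
  V \subset H -> covers U V W -> covers (H :&: U) V W.
Proof.
move=> sVH; have h : U :&: V \subset H by rewrite subIset // sVH orbT.
by rewrite /covers -setIA (setIidPr h).
Qed.

Definition cstep (H A B : {set gT}) (K M : {group gT}) : Prop :=
  chief_factor H K M /\ (covers (H :&: A) M K \/ covers (H :&: B) M K).

Lemma ns_core G A B (N : nat -> {group gT}) n i : A \subset G -> B \subset G ->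
  normal_series_cond G A B N n -> i <= n -> N i :!=: 1 ->
  core_factorisation (N i) (N i :&: A) (N i :&: B).
Proof.
move=> sAG sBG hns hi ntN.
have hfac := ns_fact sAG sBG hns hi.
have nN : forall j, j <= n -> N j <| G := hns.1.2.2.1.
split => //; split => //.
have hstep : forall K : {group gT}, K <| N i -> K \proper N i ->
   exists M : {group gT}, [/\ cstep (N i) A B K M, K \proper M & M <| N i].
  move=> K nKH pKH.
  have nsub : ~~ (N i \subset K) by move: pKH; rewrite properE => /andP[].
  have sKG : K \subset G := subset_trans (normal_sub nKH) (normal_sub (nN i hi)).
  have [j [/andP[j0 ji] nsj cj]] := find_step hns sAG sBG hi nsub.
  have nNjG := nN j (leq_trans ji hi).
  have sNjNi : N j \subset N i by apply: (ns_mono hns.1); rewrite ji hi.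
  have nKNj : K \subset 'N(N j) := subset_trans sKG (normal_norm nNjG).
  have eX : K <*> N j = K * N j := norm_joinEl nKNj.
  have nXH : K <*> N j <| N i :=
    normalY nKH (normalS sNjNi (normal_sub (nN i hi)) nNjG).
  have pKX : K \proper K <*> N j.
    rewrite properE joing_subl /=; apply: contra nsj => h.
    exact: subset_trans (joing_subr K (N j)) h.
  have [M minM _] := @mingroup_exists gT
    (fun M : {group gT} => [&& K \proper M, M \subset K <*> N j & N i \subset 'N(M)])
    (K <*> N j)%G ltac:(by rewrite /= pKX subxx normal_norm).
  case/mingroupP: minM => /and3P[pKM sMX nMH] minM.
  have sMH : M \subset N i := subset_trans sMX (normal_sub nXH).
  exists M; split => //; last by rewrite /normal sMH nMH.
  split.
    rewrite /chief_factor /normal sMH nMH !andbT.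
    apply/maxgroupP; split; first by rewrite pKM normal_norm.
    move=> Y /andP[pYM nYH] sKY.
    case: (eqVneq (gval Y) (gval K)) => // neYK; exfalso.
    have eYM : Y :=: M.
      apply: minM; last exact: proper_sub pYM.
      by rewrite properEneq eq_sym neYK sKY (subset_trans (proper_sub pYM) sMX) nYH.
    by move: pYM; rewrite eYM properE subxx.
  have sMX' : M \subset K * N j by rewrite -eX.
  case: cj => c; [left|right]; apply: covers_I => //;
    apply/(covers_sub _ (proper_sub pKM)); exact: subset_trans sMX' c.
have [N' [n' [N0 Nn nN' pN' sN']]] := build_series hstep (normal1 (N i)).
exists N', n'; split; last by move=> k hk; case: (sN' k hk).
split; first by rewrite N0.
by split => // k hk; case: (sN' k hk).
Qed.

Lemma cs_ns G A B (N : nat -> {group gT}) n :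
  chief_series G N n ->
  (forall i, 0 < i <= n -> covers A (N i) (N i.-1) \/ covers B (N i) (N i.-1)) ->
  normal_series_cond G A B N n.
Proof.
move=> [N0 [Nn cf]] cov.
have cfP : forall i, 0 < i <= n ->
    [/\ N i.-1 \proper N i, G \subset 'N(N i.-1) & N i <| G].
  by move=> i hi; case/andP: (cf i hi) => /maxgroupp/andP[p nn] nG.
split.
  split => //; split => //; split.
    by case=> [|i] hi; [rewrite N0 normal1 | case: (cfP i.+1 hi)].
  by move=> i hi; case: (cfP i hi) => /proper_sub.
move=> i hi; case: (cfP i hi) => p nn nG.
have sN := subset_trans (normal_sub nG) nn.
by case: (cov i hi) => /(covers_sub _ (proper_sub p)) c; [left|right];
  rewrite quot_cond.
Qed.

End Helpers.

Unset Implicit Arguments.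

Theorem mainTheorem1 (gT : finGroupType) (G A B : {group gT})
  (ntG : G :!=: 1) (defG : G :=: A * B) :
  (* (1) <-> (2) *)
  (core_factorisation G A B <->
     exists (N : nat -> {group gT}) (n : nat), normal_series_cond G A B N n) /\
  (* (2) <-> (3) *)
  ((exists (N : nat -> {group gT}) (n : nat), normal_series_cond G A B N n) <->
     (forall K : {group gT}, K <| G -> K \proper G ->
        exists2 M : {group gT}, M <| G /\ K \proper M &
          (M / K \subset (A * K) / K) \/ (M / K \subset (B * K) / K))) /\
  (* moreover, for chief series as in (1) *)
  (forall (N : nat -> {group gT}) (n : nat),
     chief_series G N n ->
     (forall i, 0 < i <= n -> covers A (N i) (N i.-1) \/ covers B (N i) (N i.-1)) ->
     forall i, i <= n ->
       N i :=: (N i :&: A) * (N i :&: B) /\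
       (N i :!=: 1 -> core_factorisation (N i) (N i :&: A) (N i :&: B))) /\
  (* moreover, for normal series as in (2) *)
  (forall (N : nat -> {group gT}) (n : nat),
     normal_series_cond G A B N n ->
     forall i, i <= n ->
       N i :=: (N i :&: A) * (N i :&: B) /\
       (N i :!=: 1 -> core_factorisation (N i) (N i :&: A) (N i :&: B))).
Proof.
have sAG : A \subset G by rewrite defG mulG_subl.
have sBG : B \subset G by rewrite defG mulG_subr.
have ns2cf : forall N n, normal_series_cond G A B N n -> core_factorisation G A B.
  move=> N n hns; have Nn := hns.1.2.1.
  have := ns_core sAG sBG hns (leqnn n) ltac:(by rewrite Nn).
  by rewrite Nn (setIidPr sAG) (setIidPr sBG).
split.
  split.
    by case=> _ [_ [N [n [cs cov]]]]; exists N, n; exact: cs_ns cs cov.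
  by case=> N [n hns]; exact: ns2cf hns.
split.
  split.
    case=> N [n hns] K nKG pKG.
    have nsub : ~~ (N n \subset K).
      by rewrite hns.1.2.1; move: pKG; rewrite properE => /andP[].
    have [j [/andP[j0 jn] nsj cj]] := find_step hns sAG sBG (leqnn n) nsub.
    have nNjG := hns.1.2.2.1 j (leq_trans jn (leqnn n)).
    have nKNj : K \subset 'N(N j) := subset_trans (normal_sub nKG) (normal_norm nNjG).
    exists (K <*> N j)%G.
      split; first exact: normalY.
      rewrite properE joing_subl /=; apply: contra nsj => h.
      exact: subset_trans (joing_subr K (N j)) h.
    have nK := subset_trans (normal_sub (normalY nKG nNjG)) (normal_norm nKG).
    rewrite /= (norm_joinEl nKNj) in nK *.
    by case: cj => c; [left|right]; rewrite quot_cond.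
  move=> h3.
  have hstep : forall K : {group gT}, K <| G -> K \proper G ->
     exists M : {group gT}, [/\ (fun K M : {group gT} =>
        (M / K \subset (A * K) / K) \/ (M / K \subset (B * K) / K)) K M,
        K \proper M & M <| G].
    by move=> K nK pK; have [M [nM pM] c] := h3 K nK pK; exists M.
  have [N [n [N0 Nn nN pN sN]]] := build_series hstep (normal1 G).
  exists N, n; split; last exact: sN.
  split; first by rewrite N0.
  split => //; split => // i hi; exact: proper_sub (pN i hi).
split.
  move=> N n cs cov i hi; have hns := cs_ns cs cov.
  split; first by have := ns_fact sAG sBG hns hi.
  by move=> ntN; have := ns_core sAG sBG hns hi ntN.
move=> N n hns i hi.
split; first by have := ns_fact sAG sBG hns hi.
by move=> ntN; have := ns_core sAG sBG hns hi ntN.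
Qed.
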